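(* No ordinal metric on $\omega_1$ is an ultrametric; that is, for every ordinal metric $\rho:\omega_1^2\to\omega$ there are $\alpha,\beta,\gamma\in\omega_1$ with $\rho(\alpha,\beta)>\max(\rho(\alpha,\gamma),\rho(\gamma,\beta))$.
   Context: For a set of ordinals $X$, a function $\rho:X^2\to\omega$ is an ordinal metric if: (a) $\rho(\alpha,\beta)=0$ iff $\alpha=\beta$; (b) $\rho(\alpha,\beta)=\rho(\beta,\alpha)$; (c) for all $\alpha,\beta,\gamma\in X$ with $\alpha<\beta$ and $\alpha<\gamma$, $\rho(\alpha,\beta)\le\max(\rho(\alpha,\gamma),\rho(\beta,\gamma))$; (d) for every $\beta\in X$ and $k\in\omega$ the set $\{\alpha\le\beta:\rho(\alpha,\beta)\le k\}$ is finite. *)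

(* Defs.v *)
From Stdlib Require Import List Arith.
Import ListNotations.

(* A model of omega_1: a type T with a strict well-order [lt] that is
   uncountable while every proper initial segment is countable.
   Such a well-order is unique up to isomorphism: it is (the order type of)
   the first uncountable ordinal omega_1. *)
Record is_omega1 (T : Type) (lt : T -> T -> Prop) : Prop := {
  om1_irrefl : forall x, ~ lt x x;
  om1_trans : forall x y z, lt x y -> lt y z -> lt x z;
  om1_total : forall x y, lt x y \/ x = y \/ lt y x;
  om1_wf : well_founded lt;
  om1_uncountable : ~ exists f : T -> nat, forall x y, f x = f y -> x = y;
  om1_segments_countable : forall b : T, exists f : T -> nat,
      forall x y, lt x b -> lt y b -> f x = f y -> x = y
}.

Definition ordinal_metric (T : Type) (lt : T -> T -> Prop)
  (rho : T -> T -> nat) : Prop :=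
  (forall a b, rho a b = 0 <-> a = b) /\
  (forall a b, rho a b = rho b a) /\
  (forall a b c, lt a b -> lt a c -> rho a b <= Nat.max (rho a c) (rho b c)) /\
  (forall (b : T) (k : nat), exists l : list T,
      forall a, (lt a b \/ a = b) -> rho a b <= k -> In a l).

(* Main.v *)
Require Import Defs.
From Stdlib Require Import List Arith Lia Classical ClassicalEpsilon Cantor.
Import ListNotations.

Lemma fin_nodup (T : Type) (L : list T) : forall (P : T -> Prop),
  (forall c, P c -> In c L) -> exists l, NoDup l /\ forall c, In c l <-> P c.
Proof.
  induction L as [|x L IH]; intros P HP.
  - exists []; split; [constructor|]. intros c; split; [intros []|intro H; destruct (HP c H)].
  - destruct (IH (fun c => P c /\ c <> x)) as [l [Hn Hl]].
    { intros c [Hc Hx]. destruct (HP c Hc) as [->|H]; [congruence|exact H]. }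
    destruct (classic (P x)) as [Px|nPx].
    + exists (x :: l); split.
      * constructor; [intro H; apply Hl in H; tauto | exact Hn].
      * intros c; simpl; split.
        -- intros [<-|H]; [exact Px|apply Hl in H; tauto].
        -- intro Pc. destruct (classic (x = c)) as [E|E]; [left; exact E|right; apply Hl; split; auto].
    + exists l; split; [exact Hn|]. intros c; rewrite Hl; split; [tauto|].
      intro Pc; split; [exact Pc|intro E; subst; tauto].
Qed.

Theorem mainTheorem20 :
  forall (T : Type) (lt : T -> T -> Prop) (rho : T -> T -> nat),
    is_omega1 T lt -> ordinal_metric T lt rho ->
    exists a b c : T, rho a b > Nat.max (rho a c) (rho c b).
Proof.
  intros T lt rho Hom [H0 [Hsym [_ Hfin]]].
  apply NNPP; intro Hno.
  assert (U : forall a b c, rho a b <= Nat.max (rho a c) (rho c b)).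
  { intros a b c. apply Nat.nlt_ge. intro Hlt. apply Hno. exists a, b, c. exact Hlt. }
  apply (om1_uncountable _ _ Hom).
  destruct (classic (exists b0 : T, True)) as [[b0 _]|NE].
  2:{ exists (fun _ => 0). intros x. exfalso. apply NE. exists x. auto. }
  set (S := fun a c => rho c b0 <= rho a b0 /\ (lt c a \/ c = a)).
  assert (Ex : forall a, exists l, NoDup l /\ forall c, In c l <-> S a c).
  { intro a. destruct (Hfin a (rho a b0)) as [L HL].
    apply fin_nodup with L. intros c [Hc Hca]. apply HL; [exact Hca|].
    specialize (U c a b0). rewrite (Hsym b0 a) in U. lia. }
  pose (g := fun a => proj1_sig (constructive_indefinite_description _ (Ex a))).
  assert (Hg : forall a, NoDup (g a) /\ forall c, In c (g a) <-> S a c).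
  { intro a. unfold g. destruct (constructive_indefinite_description _ (Ex a)); simpl; auto. }
  assert (Key : forall a b, lt a b -> rho a b0 = rho b b0 -> length (g a) < length (g b)).
  { intros a b Hab Hk.
    destruct (Hg a) as [Na Ia]; destruct (Hg b) as [Nb Ib].
    assert (Hb : ~ In b (g a)).
    { intro H. apply Ia in H. destruct H as [_ [H|H]].
      - apply (om1_irrefl _ _ Hom a). eapply (om1_trans _ _ Hom); eauto.
      - subst. apply (om1_irrefl _ _ Hom a); auto. }
    assert (length (b :: g a) <= length (g b)).
    { apply NoDup_incl_length; [constructor; auto|].
      intros c [<-|Hc]; apply Ib.
      - split; [lia|right; reflexivity].
      - apply Ia in Hc. destruct Hc as [Hc1 [Hc2|Hc2]]; split; try lia.
        + left; eapply (om1_trans _ _ Hom); eauto.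
        + subst; left; auto. }
    simpl in *; lia. }
  exists (fun a => to_nat (rho a b0, length (g a))).
  intros x y Hxy.
  apply (f_equal of_nat) in Hxy. rewrite !cancel_of_to in Hxy.
  injection Hxy as E1 E2.
  destruct (om1_total _ _ Hom x y) as [H|[H|H]]; auto.
  - specialize (Key x y H E1). lia.
  - specialize (Key y x H (eq_sym E1)). lia.
Qed.
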